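(* Let $P\subset\mathcal O_W$ be a binomial ideal on $W$ of dimension $n$ with $\theta=\max\mathrm{Eord}(P)>0$. Then at a point $\xi$ with $\mathrm{Eord}_\xi(P)=\theta$ there exists a hypersurface of $E$-maximal contact for $P$ of the form $\{x_i=0\}$ for some $i$.
   Context: $K$ is an algebraically closed field of arbitrary characteristic; $W=\mathrm{Spec}(K[x_1,\dots,x_s,y_1,\dots,y_{n-s}]_y)$ (localization at $y_1\cdots y_{n-s}$), $E\cap W=\{V(x_1),\dots,V(x_s)\}$. For $\xi$ let $\Lambda(\xi)=\{i:\xi\in V(x_i)\}$, $E^0_{\Lambda(\xi)}$ the stratum of points lying on $V(x_i)$ exactly for $i\in\Lambda(\xi)$ (ideal generated by these $x_i$), $\mathrm{Eord}_\xi(J)=\max\{m: J_\xi\subset(I(E^0_{\Lambda(\xi)})_\xi)^m\}$, $\mathrm{ESing}(J,\theta)=\{\xi:\mathrm{Eord}_\xi(J)\ge\theta\}$. A binomial ideal is an ideal generated by elements $x^{\lambda}(1-\mu y^{\delta})$ or $x^{\nu}(y^{\gamma}x^{\alpha}-bx^{\beta})$ with $\lambda,\nu,\alpha,\beta\in\mathbb N^s$, $\gamma,\delta\in\mathbb Z^{n-s}$, $\mu,b\in K$, each $y^\gamma x^\alpha-bx^\beta$ without common factors and $0<|\alpha|\le|\beta|$. $E$-maximal contact: for $\theta=\max\mathrm{Eord}(P)$ attained at $\xi$, a hypersurface $V$ is of $E$-maximal contact for $P$ at $\xi$ if $V$ is regular, $\xi\in V$, $\mathrm{ESing}(P,\theta)\subseteq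 V$, and after blowing up along a combinatorial center $Z=\bigcap_{j\in\mathcal I}\{x_j=0\}\subset V$ one still has $\mathrm{ESing}(P',\theta)\subseteq V'$, where $V'$ is the strict transform and $P'$ the controlled (here weak) transform defined by $P\mathcal O_{W'}=I(Y')^{\theta}P'$ with $Y'$ the exceptional divisor, the $E$-order on $W'$ being taken with respect to the strict transforms of $E$ together with $Y'$; and so on while the maximal $E$-order stays $\theta$. *)

(* Defs.v *)
From mathcomp Require Import all_boot all_algebra.
From mathcomp Require Import mpoly.
Set Implicit Arguments. Unset Strict Implicit. Unset Printing Implicit Defensive.
Import GRing.Theory.
Local Open Scope ring_scope.

(* W = Spec K[x_1..x_s, y_1..y_t]_y, n = s + t.
   Since the y_j are units of O_W, every element / ideal of O_W is
   represented (up to a unit y-monomial) by polynomials of K[x,y]. *)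

Section Defs.
Variables (K : closedFieldType) (s t : nat).

Definition XYPoly := {mpoly K[s + t]}.

Definition xv (i : 'I_s) : XYPoly := 'X_(lshift t i).
Definition yv (j : 'I_t) : XYPoly := 'X_(rshift s j).

Definition xmon (a : 'I_s -> nat) : XYPoly := \prod_(i < s) xv i ^+ a i.
Definition ymon (a : 'I_t -> nat) : XYPoly := \prod_(j < t) yv j ^+ a j.

Definition posp (d : 'I_t -> int) : 'I_t -> nat := fun j => absz (Num.max 0%R (d j)).
Definition negp (d : 'I_t -> int) : 'I_t -> nat := fun j => absz (Num.max 0%R (- d j)).

(* The binomial generators, multiplied by the unit y^(negative part) to
   clear denominators:
   x^lam (1 - mu y^del)          ~  x^lam (y^(del-) - mu y^(del+))
   x^nu (y^gam x^al - b x^be)    ~  x^nu (y^(gam+) x^al - b y^(gam-) x^be) *)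
Definition is_binomial_gen (g : XYPoly) : Prop :=
  (exists (lam : 'I_s -> nat) (mu : K) (del : 'I_t -> int),
      g = xmon lam * (ymon (negp del) - mu *: ymon (posp del)))
  \/
  (exists (nu al be : 'I_s -> nat) (gam : 'I_t -> int) (b : K),
      (forall i, al i = 0%N \/ be i = 0%N) (* no common factor *)
      /\ (0 < \sum_(i < s) al i)%N
      /\ (\sum_(i < s) al i <= \sum_(i < s) be i)%N
      /\ g = xmon nu * (ymon (posp gam) * xmon al
                        - b *: (ymon (negp gam) * xmon be))).

(* closed points of W: y-coordinates nonzero *)
Definition XYPoint := 'I_(s + t) -> K.
Definition is_point (a : XYPoint) : Prop := forall j : 'I_t, a (rshift s j) != 0.

Definition in_ideal (G : XYPoly -> Prop) (f : XYPoly) : Prop :=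
  exists cs : seq (XYPoly * XYPoly),
    (forall c, c \in cs -> G c.2) /\ f = \sum_(c <- cs) c.1 * c.2.

(* generators of (I(E^0_Lam))^m = (x_i : i in Lam)^m *)
Definition powgens (Lam : {set 'I_s}) (m : nat) (g : XYPoly) : Prop :=
  exists a : 'I_s -> nat,
    (forall i, i \notin Lam -> a i = 0%N) /\ (\sum_(i < s) a i)%N = m
    /\ g = xmon a.

(* Lambda(xi): indices of the E-components through xi (in a chart, the
   E-components are exactly the coordinate hyperplanes x_i = 0) *)
Definition Lam (a : XYPoint) : {set 'I_s} := [set i | a (lshift t i) == 0].

(* f belongs to (I(E^0_Lam(a))^m)_a in the local ring O_{W,a} *)
Definition loc_mem (a : XYPoint) (m : nat) (f : XYPoly) : Prop :=
  exists h : XYPoly, h.@[a] != 0 /\ in_ideal (powgens (Lam a) m) (h * f).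

Definition EordGe (gs : seq XYPoly) (a : XYPoint) (m : nat) : Prop :=
  forall g, g \in gs -> loc_mem a m g.

(* a chart of an iterated combinatorial blow-up: labels of the coordinate
   hyperplanes x_i = 0 as global components of E (labels 0..s-1: original
   V(x_i); label s+k: exceptional divisor of the (k+1)-th blow-up), and
   generators of the transformed ideal. *)
Record chart := Chart { lab : 'I_s -> nat ; gens : seq XYPoly }.

Definition state := chart -> Prop.

Definition init_state (gs : seq XYPoly) : state :=
  fun c => (forall i, lab c i = nat_of_ord i) /\ gens c = gs.

Definition MaxEordIs (st : state) (th : nat) : Prop :=
  (exists c a, st c /\ is_point a /\ EordGe (gens c) a th)
  /\ (forall c a, st c -> is_point a -> ~ EordGe (gens c) a th.+1).

(* ESing(P, th) contained in V = strict transform of V(x_{i0}) (label i0) *)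
Definition ESingIn (st : state) (th : nat) (i0 : nat) : Prop :=
  forall c a, st c -> is_point a -> EordGe (gens c) a th ->
    exists j, lab c j = i0 /\ a (lshift t j) = 0.

(* the chart meets the center Z = intersection of components labelled in L *)
Definition meets (L : seq nat) (c : chart) : Prop :=
  forall l, l \in L -> exists j, lab c j = l.

(* chart j0 substitution: x_j |-> x_j0 * x_j for j in I, j <> j0 *)
Definition sigma_sub (c : chart) (L : seq nat) (j0 : 'I_s) (p : XYPoly) : XYPoly :=
  p \mPo [tuple (match split k with
                 | inl j => if (lab c j \in L) && (j != j0) then xv j0 * xv j
                            else xv j
                 | inr j => yv j
                 end) | k < s + t].

Definition admissible (st : state) (th : nat) (i0 : nat) (L : seq nat) : Prop :=
  L != [::] /\ (exists c, st c /\ meets L c) /\ i0 \in L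
  /\ (forall c j0 g, st c -> meets L c -> lab c j0 \in L -> g \in gens c ->
        exists q, sigma_sub c L j0 g = xv j0 ^+ th * q).

(* blow-up along L, new exceptional label nl, weak transform with exponent th *)
Definition blowup (th : nat) (nl : nat) (L : seq nat) (st : state) : state :=
  fun c' => exists c, st c /\
   ((~ meets L c /\ (forall i, lab c' i = lab c i) /\ gens c' = gens c)
    \/ (meets L c /\ exists j0, lab c j0 \in L
        /\ (forall i, lab c' i = if i == j0 then nl else lab c i)
        /\ size (gens c') = size (gens c)
        /\ (forall k, (k < size (gens c))%N ->
              xv j0 ^+ th * nth 0 (gens c') k
              = sigma_sub c L j0 (nth 0 (gens c) k)))).

(* after every admissible sequence of blow-ups, performed while the maximal
   E-order stays th, ESing(P', th) stays inside the strict transform V' *)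
Fixpoint MCseq (th i0 k : nat) (st : state) (Ls : seq (seq nat)) : Prop :=
  match Ls with
  | [::] => True
  | L :: Ls' => MaxEordIs st th -> admissible st th i0 L ->
      let st' := blowup th (s + k) L st in
      ESingIn st' th i0 /\ MCseq th i0 k.+1 st' Ls'
  end.

Definition EMaxContact (gs : seq XYPoly) (th : nat) (xi : XYPoint) (i0 : 'I_s) : Prop :=
  xi (lshift t i0) = 0
  /\ ESingIn (init_state gs) th i0
  /\ forall Ls, MCseq th i0 0 (init_state gs) Ls.

End Defs.

(* Main.v *)
Require Import Defs.
From mathcomp Require Import all_boot all_algebra.
From mathcomp Require Import mpoly.
From mathcomp Require Import zify.
From Stdlib Require Import Classical.
Set Implicit Arguments. Unset Strict Implicit. Unset Printing Implicit Defensive.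
Import GRing.Theory.
Local Open Scope ring_scope.

Lemma low_coef (R : idomainType) (p q : {poly R}) N :
  p`_0 != 0 -> (forall d, (d < N)%N -> (p * q)`_d = 0) ->
  forall d, (d < N)%N -> q`_d = 0.
Proof.
move=> p0 H; elim/ltn_ind=> d IH dN.
have := H d dN; rewrite coefMr big_ord_recr /= subnn big1.
  by rewrite add0r => /eqP; rewrite mulf_eq0 (negbTE p0) /= => /eqP.
move=> i _; rewrite IH ?mulr0 //; exact: ltn_trans (ltn_ord i) dN.
Qed.


Section Aux.
Variables (K : closedFieldType) (s t : nat).
Local Notation n := (s + t)%N.

Definition f0 : {rmorphism K -> {poly {mpoly K[n]}}} := (polyC \o @mpolyC n K).

Definition wt (a : XYPoint K s t) (k : 'I_n) : nat := ((k < s)%N && (a k == 0)).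
Definition W a (m : 'X_{1..n}) : nat := (\sum_(k < n) wt a k * m k)%N.
Definition hX a (k : 'I_n) : {poly {mpoly K[n]}} := 'X^(wt a k) * ('X_k)%:P.
Definition phi a (p : {mpoly K[n]}) := mmap f0 (hX a) p.

Lemma phiM a p q : phi a (p * q) = phi a p * phi a q.
Proof. exact: (mmap_is_multiplicative (hX a) f0).1. Qed.

Lemma mmap1_hX a m : mmap1 (hX a) m = 'X^(W a m) * ('X_[m])%:P.
Proof.
rewrite /mmap1 /hX.
under eq_bigr do rewrite exprMn -exprM.
rewrite big_split /= prodrXr mpolyXE_id rmorph_prod.
congr (_ * _); last by apply: eq_bigr => i _; rewrite rmorphXn.
Qed.

Lemma sum_msupp_delta (p : {mpoly K[n]}) (nu : 'X_{1..n}) (F : 'X_{1..n} -> K) :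
  \sum_(m <- msupp p) p@_m * (m == nu)%:R * F m = p@_nu * F nu.
Proof.
case: (boolP (nu \in msupp p)) => Hnu.
  rewrite (bigD1_seq nu) //= ?msupp_uniq // eqxx mulr1 big1 ?addr0 //.
  by move=> m /negbTE ->; rewrite mulr0 mul0r.
rewrite memN_msupp_eq0 // mul0r big1_seq // => m /andP [_ Hm].
case: eqP => [Hmn|_]; last by rewrite mulr0 mul0r.
by move: Hnu; rewrite -Hmn Hm.
Qed.

Lemma phi_coef a p d nu : ((phi a p)`_d)@_nu = ((W a nu == d)%:R * p@_nu).
Proof.
rewrite /phi /mmap coef_sum raddf_sum /=.
under eq_bigr => m _ do rewrite mmap1_hX /= mulrCA -rmorphM coefXnM.
transitivity (\sum_(m <- msupp p) p@_m * (m == nu)%:R * (W a m == d)%:R).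
  apply: eq_bigr => m _.
  case: ltnP => Hd.
    by rewrite mcoeff0 (gtn_eqF Hd) mulr0.
  rewrite coefC subn_eq0; case: (leqP d (W a m)) => Hw.
    have -> : W a m = d by apply/eqP; rewrite eqn_leq Hw Hd.
    by rewrite eqxx mulr1 mul_mpolyC mcoeffZ mcoeffX.
  by rewrite mcoeff0 (ltn_eqF Hw) mulr0.
by rewrite sum_msupp_delta mulrC.
Qed.

Lemma W_pos a m : W a m != 0%N -> exists k : 'I_n, [&& (k < s)%N, a k == 0 & (0 < m k)%N].
Proof.
move=> HW; case: (boolP [exists k : 'I_n, (wt a k * m k != 0)%N]).
  move=> /existsP [k]; rewrite /wt muln_eq0 negb_or => /andP [].
  by case: andP => // [[H1 H2]] _ Hm; exists k; rewrite H1 H2 lt0n.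
move=> Hn; move: HW; rewrite /W big1 // => k _.
by apply/eqP; apply: contraNT Hn => Hk; apply/existsP; exists k.
Qed.

Lemma phi_low_ne0 a (h : {mpoly K[n]}) : h.@[a] != 0 -> (phi a h)`_0 != 0.
Proof.
apply: contra => /eqP H0.
have Hz : forall m, W a m = 0%N -> h@_m = 0.
  move=> m Hm; have := phi_coef a h 0 m; rewrite H0 mcoeff0 Hm eqxx mul1r.
  by move=> <-.
rewrite mevalE big1_seq // => m /andP [_ Hm].
case: (eqVneq (W a m) 0%N) => [/Hz -> | /W_pos [k /and3P [_ /eqP ak mk]]].
  by rewrite mul0r.
rewrite (bigD1 k) //= ak expr0n; case: (m k) mk => // ? _.
by rewrite !mul0r mulr0.
Qed.

Lemma W_add a m1 m2 : W a (m1 + m2)%MM = (W a m1 + W a m2)%N.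
Proof. by rewrite /W -big_split; apply: eq_bigr => k _; rewrite mnmDE mulnDr. Qed.

Lemma W_U a k0 : W a U_(k0)%MM = wt a k0.
Proof.
rewrite /W (bigD1 k0) //= mnm1E eqxx muln1 big1 ?addn0 // => k Hk.
by rewrite mnm1E eq_sym (negbTE Hk) muln0.
Qed.

Lemma W_mulmn a m c : W a (m *+ c)%MM = (W a m * c)%N.
Proof. by rewrite /W big_distrl; apply: eq_bigr => k _; rewrite mulmnE mulnA. Qed.

Lemma W_sum a (I : Type) (r : seq I) (F : I -> 'X_{1..n}) :
  W a (\sum_(i <- r) F i)%MM = (\sum_(i <- r) W a (F i))%N.
Proof.
elim: r => [|x r IH]; first by rewrite !big_nil /W big1 // => k _; rewrite mnm0E muln0.
by rewrite !big_cons W_add IH.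
Qed.

Definition Bof (b : 'I_s -> nat) : 'X_{1..n} := (\sum_(i < s) U_(lshift t i) *+ b i)%MM.

Lemma xmonE (b : 'I_s -> nat) : xmon K t b = 'X_[Bof b].
Proof. by rewrite /xmon /xv mprodXnE. Qed.

Lemma ideal_low a th (f : {mpoly K[n]}) :
  in_ideal (powgens (Lam a) th) f -> forall nu, (W a nu < th)%N -> f@_nu = 0.
Proof.
move=> [cs [Hcs ->]] nu Hnu; rewrite raddf_sum big1_seq // => c /andP [_ Hc].
have [b [Hb [Hsum ->]]] := Hcs c Hc.
rewrite xmonE; apply/eqP; rewrite mcoeff_eq0; apply/negP => Hin.
move: Hin; rewrite (perm_mem (msuppMX c.1 (Bof b))) => /mapP [m' _ Em].
move: Hnu; rewrite Em W_add /Bof W_sum.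
rewrite (eq_bigr (fun i => b i)) ?Hsum ?ltnNge ?leq_addr // => i _.
rewrite W_mulmn W_U /wt /=.
case: (eqVneq (b i) 0%N) => [->|Hbi]; first by rewrite muln0.
have : i \in Lam a by apply: contraNT Hbi => /Hb ->.
by rewrite inE => ->; rewrite ltn_ord mul1n.
Qed.

Lemma loc_mem_W a th g m : loc_mem a th g -> m \in msupp g -> (th <= W a m)%N.
Proof.
move=> [h [Hh Hid]] Hm; rewrite leqNgt; apply/negP => Hlt.
have Hprod : forall d, (d < th)%N -> (phi a h * phi a g)`_d = 0.
  move=> d Hd; rewrite -phiM; apply/mpolyP => nu; rewrite phi_coef mcoeff0.
  case: eqP => [Hw|]; last by rewrite mul0r.
  by rewrite (ideal_low Hid) ?mulr0 // Hw.
have := low_coef (phi_low_ne0 Hh) Hprod Hlt.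
move=> /(congr1 (mcoeff m)); rewrite phi_coef eqxx mul1r mcoeff0 => /eqP.
by rewrite mcoeff_eq0 Hm.
Qed.

Definition xdeg (m : 'X_{1..n}) : nat := (\sum_(i < s) m (lshift t i))%N.

Lemma xdeg_add m1 m2 : xdeg (m1 + m2)%MM = (xdeg m1 + xdeg m2)%N.
Proof. by rewrite /xdeg -big_split; apply: eq_bigr => i _; rewrite mnmDE. Qed.

Lemma xdeg_U (j0 : 'I_s) c : xdeg (U_(lshift t j0) *+ c)%MM = c.
Proof.
rewrite /xdeg (bigD1 j0) //= mulmnE mnm1E eqxx mul1n big1 ?addn0 // => i Hi.
by rewrite mulmnE mnm1E (inj_eq (@lshift_inj _ _)) eq_sym (negbTE Hi).
Qed.

Lemma W_split a m :
  W a m = (\sum_(i < s) (a (lshift t i) == 0%R :> K) * m (lshift t i))%N.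
Proof.
rewrite /W big_split_ord /= [X in (_ + X)%N]big1 ?addn0.
  by apply: eq_bigr => i _; rewrite /wt /= ltn_ord.
by move=> j _; rewrite /wt /= ltnNge leq_addr.
Qed.

Lemma xdeg_W a m :
  xdeg m = (W a m + \sum_(i < s) (a (lshift t i) != 0%R :> K) * m (lshift t i))%N.
Proof.
rewrite W_split -big_split /xdeg; apply: eq_bigr => i _.
by case: (a (lshift t i) == 0%R); rewrite /= ?mul0n ?mul1n ?addn0.
Qed.

Lemma W_le_xdeg a m : (W a m <= xdeg m)%N.
Proof. by rewrite (xdeg_W a) leq_addr. Qed.

Lemma W_eq_xdeg a m i : W a m = xdeg m -> (0 < m (lshift t i))%N -> a (lshift t i) = 0.
Proof.
move=> HW Hm; apply/eqP; move: HW; rewrite (xdeg_W a) -{1}[W a m]addn0 => /eqP.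
rewrite eqn_add2l eq_sym => /eqP H; apply: contraTT Hm => Ha.
move: H; rewrite (bigD1 i) //= Ha mul1n => /eqP; rewrite addn_eq0 => /andP [/eqP -> _].
by [].
Qed.

Definition condk (c : chart K s t) (L : seq nat) (j0 : 'I_s) (k : 'I_n) : bool :=
  match split k with inl j => (lab c j \in L) && (j != j0) | inr _ => false end.
Definition tau c L j0 (k : 'I_n) : 'X_{1..n} :=
  (U_(k) + (if condk c L j0 k then U_(lshift t j0) else 0))%MM.
Definition cmu (c : chart K s t) (L : seq nat) (j0 : 'I_s) (m : 'X_{1..n}) : nat :=
  (\sum_(i < s | (lab c i \in L) && (i != j0)) m (lshift t i))%N.
Definition Psi c L j0 m := (m + U_(lshift t j0) *+ cmu c L j0 m)%MM.

Lemma condk_l c L j0 i : condk c L j0 (lshift t i) = (lab c i \in L) && (i != j0).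
Proof. by rewrite /condk (_ : split (lshift t i) = inl i) //; exact: (unsplitK (inl i)). Qed.

Lemma condk_r c L j0 j : condk c L j0 (rshift s j) = false.
Proof. by rewrite /condk (_ : split (rshift s j) = inr j) //; exact: (unsplitK (inr j)). Qed.

Lemma tauE c L j0 k l : tau c L j0 k l = ((k == l) + condk c L j0 k * (lshift t j0 == l))%N.
Proof. by rewrite /tau mnmDE mnm1E; case: condk; rewrite /= ?mnm1E ?mnm0E ?mul1n. Qed.

Lemma entryE c L j0 (k : 'I_n) :
  (match split k with
   | inl j => if (lab c j \in L) && (j != j0) then xv K t j0 * xv K t j else xv K t j
   | inr j => yv K s j end) = 'X_[tau c L j0 k].
Proof.
rewrite /tau /condk; case: splitP => [j Ej|j Ej].
  have -> : k = lshift t j by apply: val_inj.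
  case: ifP => _; last by rewrite addm0.
  by rewrite /xv -mpolyXD addmC.
have -> : k = rshift s j by apply: val_inj.
by rewrite addm0.
Qed.

Lemma sum_tau c L j0 (m : 'X_{1..n}) :
  (\sum_(k < n) tau c L j0 k *+ m k)%MM = Psi c L j0 m.
Proof.
apply/mnmP => l; rewrite mnm_sumE /Psi mnmDE mulmnE mnm1E.
under eq_bigr => k _ do rewrite mulmnE tauE mulnDl.
rewrite big_split /= (bigD1 l) //= eqxx mul1n big1 ?addn0; last first.
  by move=> k /negbTE ->; rewrite mul0n.
congr (_ + _)%N.
rewrite big_split_ord /= [X in (_ + X)%N]big1 ?addn0; last first.
  by move=> j _; rewrite condk_r.
rewrite /cmu big_distrr /= [RHS]big_mkcond /=; apply: eq_bigr => i _.
rewrite condk_l; case: ifP => _; last by rewrite mul0n.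
by rewrite mul1n.
Qed.

Lemma sigma_subE c L j0 p :
  sigma_sub c L j0 p = \sum_(m <- msupp p) p@_m *: 'X_[Psi c L j0 m].
Proof.
rewrite /sigma_sub comp_mpolyE; apply: eq_bigr => m _; congr (_ *: _).
under eq_bigr => k _ do rewrite tnth_mktuple entryE.
by rewrite mprodXnE sum_tau.
Qed.

Lemma Psi_coord c L j0 m l :
  Psi c L j0 m l = (m l + (lshift t j0 == l) * cmu c L j0 m)%N.
Proof. by rewrite /Psi mnmDE mulmnE mnm1E mulnC. Qed.

Lemma Psi_inj c L j0 : injective (Psi c L j0).
Proof.
move=> m1 m2 E.
have Hoff : forall l, l != lshift t j0 -> m1 l = m2 l.
  move=> l Hl; have := congr1 (fun m : 'X_{1..n} => m l) E.
  by rewrite !Psi_coord eq_sym (negbTE Hl) !mul0n !addn0.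
have Hc : cmu c L j0 m1 = cmu c L j0 m2.
  apply: eq_bigr => i /andP [_ Hi]; apply: Hoff.
  by rewrite (inj_eq (@lshift_inj _ _)).
apply/mnmP => l; case: (eqVneq l (lshift t j0)) => [->|/Hoff//].
have := congr1 (fun m : 'X_{1..n} => m (lshift t j0)) E.
rewrite !Psi_coord eqxx Hc mul1n; lia.
Qed.

Lemma sigma_coef c L j0 p mu : (sigma_sub c L j0 p)@_(Psi c L j0 mu) = p@_mu.
Proof.
rewrite sigma_subE raddf_sum /=.
under eq_bigr do rewrite mcoeffZ mcoeffX (inj_eq (@Psi_inj c L j0)) -[_ * _]mulr1.
by rewrite sum_msupp_delta mulr1.
Qed.

Lemma cmu_le c L j0 mu : (cmu c L j0 mu + mu (lshift t j0) <= xdeg mu)%N.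
Proof.
rewrite /xdeg (bigD1 j0) //= addnC leq_add2l /cmu.
rewrite [X in (_ <= X)%N]big_mkcond [X in (X <= _)%N]big_mkcond; apply: leq_sum => i _.
by case: (lab c i \in L); case: (i != j0).
Qed.

Definition Inv th (i0 : nat) idx (st : state K s t) :=
  forall c, st c -> (idx < size (gens c))%N /\
   exists mu, mu \in msupp (nth 0 (gens c) idx) /\ (xdeg mu <= th)%N /\
     ((exists j, lab c j = i0 /\ (0 < mu (lshift t j))%N) \/ (xdeg mu < th)%N).

Lemma Inv_ESing th i0 idx st : Inv th i0 idx st -> ESingIn st th i0.
Proof.
move=> HI c a Hc Ha HE.
have [Hsz [mu [Hmu [Hx Hw]]]] := HI c Hc.
have HW := loc_mem_W (HE _ (mem_nth 0 Hsz)) Hmu.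
have Hle := W_le_xdeg a mu.
case: Hw => [[j [Hj Hpos]]|Hlt]; last by lia.
exists j; split => //; apply: (@W_eq_xdeg a mu) => //; lia.
Qed.

Lemma Inv_blowup th i0 idx st nl L :
  Inv th i0 idx st -> Inv th i0 idx (blowup th nl L st).
Proof.
move=> HI c' [c [Hc Hcase]].
have [Hsz [mu [Hmu [Hx Hw]]]] := HI c Hc.
case: Hcase => [[_ [Hlab Hg]] | [_ [j0 [Hj0 [Hlab [Hsize Hrel]]]]]].
  rewrite Hg; split => //; exists mu; do 2 split => //.
  case: Hw => [[j [Hj Hp]]|]; last by right.
  by left; exists j; rewrite Hlab.
split; first by rewrite Hsize.
have Hrel' := Hrel idx Hsz; rewrite /xv in Hrel'.
have Hin : Psi c L j0 mu \in msupp (nth 0 (gens c') idx * 'X_[U_(lshift t j0) *+ th]).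
  by rewrite mcoeff_msupp -mpolyXn mulrC Hrel' sigma_coef -mcoeff_msupp.
move: Hin; rewrite (perm_mem (msuppMX _ _)) => /mapP [m' Hm' EPsi].
have Hx1 : xdeg (Psi c L j0 mu) = (xdeg mu + cmu c L j0 mu)%N.
  by rewrite /Psi xdeg_add xdeg_U.
have Hx2 : xdeg (Psi c L j0 mu) = (th + xdeg m')%N.
  by rewrite EPsi xdeg_add xdeg_U.
have Hcl := cmu_le c L j0 mu.
have Hco : forall j, j != j0 -> m' (lshift t j) = mu (lshift t j).
  move=> j Hj; have := congr1 (fun m : 'X_{1..n} => m (lshift t j)) EPsi.
  rewrite Psi_coord mnmDE mulmnE mnm1E (inj_eq (@lshift_inj _ _)) eq_sym (negbTE Hj).
  by rewrite /= !mul0n add0n addn0.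
exists m'; split => //; split; first by lia.
case: Hw => [[j [Hj Hp]]|Hlt]; last by right; lia.
case: (eqVneq j j0) => [Ej|Nj].
  by right; subst j; lia.
by left; exists j; rewrite Hlab (negbTE Nj) Hco.
Qed.

Lemma Inv_MCseq th i0 idx Ls : forall st k,
  Inv th i0 idx st -> MCseq th i0 k st Ls.
Proof.
elim: Ls => [//|L Ls IH] st k HI /= _ _; split.
  exact: (Inv_ESing (Inv_blowup (nl:=(s + k)%N) (L:=L) HI)).
exact: (IH _ _ (Inv_blowup (nl:=(s + k)%N) (L:=L) HI)).
Qed.

Lemma choose_b (v : 'I_s -> nat) N : (N <= \sum_i v i)%N ->
  exists b : 'I_s -> nat, (forall i, b i <= v i)%N /\ (\sum_i b i)%N = N.
Proof.
elim: N => [|N IH] H.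
  by exists (fun _ => 0%N); split => //; rewrite big1.
have [b [Hb Hs]] := IH (ltnW H).
have [i Hi] : exists i, (b i < v i)%N.
  case: (boolP [exists i, (b i < v i)%N]) => [/existsP //|Hn].
  have : (\sum_i v i <= \sum_i b i)%N.
    apply: leq_sum => i _; rewrite leqNgt; apply: contraNN Hn => Hi.
    by apply/existsP; exists i.
  by rewrite Hs; lia.
exists (fun j => b j + (j == i))%N; split.
  by move=> j; case: (eqVneq j i) => [->|_]; rewrite ?addn1 ?addn0 //.
rewrite big_split /= Hs (bigD1 i) //= eqxx big1 ?addn0 ?addn1 //.
by move=> j /negbTE ->.
Qed.

Lemma in_ideal0 (G : {mpoly K[n]} -> Prop) : in_ideal G 0.
Proof. by exists [::]; rewrite big_nil. Qed.

Lemma in_idealD (G : {mpoly K[n]} -> Prop) f1 f2 :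
  in_ideal G f1 -> in_ideal G f2 -> in_ideal G (f1 + f2).
Proof.
move=> [cs1 [H1 ->]] [cs2 [H2 ->]]; exists (cs1 ++ cs2); split.
  by move=> c; rewrite mem_cat => /orP [/H1|/H2].
by rewrite big_cat.
Qed.

Lemma in_ideal_gen (G : {mpoly K[n]} -> Prop) q g : G g -> in_ideal G (q * g).
Proof. by move=> Hg; exists [:: (q, g)]; split; [move=> c; rewrite inE => /eqP ->|rewrite big_seq1]. Qed.

Lemma Bof_l b i : Bof b (lshift t i) = b i.
Proof.
rewrite /Bof mnm_sumE (bigD1 i) //= mulmnE mnm1E eqxx mul1n big1 ?addn0 // => j Hj.
by rewrite mulmnE mnm1E (inj_eq (@lshift_inj _ _)) (negbTE Hj).
Qed.

Lemma Bof_r b j : Bof b (rshift s j) = 0%N.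
Proof.
rewrite /Bof mnm_sumE big1 // => i _; rewrite mulmnE mnm1E.
by rewrite (_ : (lshift t i == rshift s j) = false) // eq_lrshift.
Qed.

Lemma loc_mem_full (a : XYPoint K s t) th (g : {mpoly K[n]}) : (forall i, a (lshift t i) = 0) ->
  (forall mu, mu \in msupp g -> (th <= xdeg mu)%N) -> loc_mem a th g.
Proof.
move=> Ha Hg; exists 1; split; first by rewrite meval1 oner_neq0.
rewrite mul1r [g]mpolyE; elim: (msupp g) (fun m (H : m \in msupp g) => Hg m H) => [|m r IH] Hr.
  by rewrite big_nil; exact: in_ideal0.
rewrite big_cons; apply: in_idealD; last by apply: IH => mu Hmu; apply: Hr; rewrite inE Hmu orbT.
have [b [Hb Hs]] := choose_b (Hr m (mem_head _ _)).
have Hle : (Bof b <= m)%MM.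
  apply/mnm_lepP => l; rewrite -(splitK l); case: (split l) => [i|j] /=.
    by rewrite Bof_l Hb.
  by rewrite Bof_r.
rewrite -(submK Hle) mpolyXD scalerAl -xmonE; apply: in_ideal_gen.
exists b; split; last by split.
by move=> i; rewrite inE Ha eqxx.
Qed.

End Aux.

Unset Implicit Arguments.

Theorem mainTheorem14 (K : closedFieldType) (s t : nat) (P : seq (XYPoly K s t))
  (th : nat) (xi : XYPoint K s t) :
  (forall g, g \in P -> is_binomial_gen g) ->
  (0 < th)%N ->
  MaxEordIs (init_state P) th ->
  is_point xi -> EordGe P xi th -> ~ EordGe P xi th.+1 ->
  exists i0 : 'I_s, EMaxContact P th xi i0.
Proof.
move=> _ Hth [_ Hmax] Hxi HE _.
pose a0 : XYPoint K s t := fun k => if (k < s)%N then 0 else 1.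
have Ha0 : is_point a0 by move=> j; rewrite /a0 /= ltnNge leq_addr /= oner_neq0.
have Hc0 : init_state P (Chart (fun i => nat_of_ord i) P) by split.
have Hex : exists g, g \in P /\ exists mu, mu \in msupp g /\ (xdeg mu <= th)%N.
  apply: NNPP => Hn; apply: (Hmax _ _ Hc0 Ha0) => g Hg /=.
  apply: loc_mem_full; first by move=> i; rewrite /a0 /= ltn_ord.
  move=> mu Hmu; rewrite ltnNge; apply/negP => Hle; apply: Hn.
  by exists g; split => //; exists mu.
have [g [Hg [mu [Hmu Hx]]]] := Hex.
have HW := loc_mem_W (HE g Hg) Hmu.
have Hle := W_le_xdeg xi mu.
have [i0 Hi0] : exists i0 : 'I_s, (0 < mu (lshift t i0))%N.
  apply: NNPP => Hn.
  have : xdeg mu = 0%N.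
    rewrite /xdeg big1 // => i _; apply/eqP; rewrite -leqn0 leqNgt; apply/negP => H.
    by apply: Hn; exists i.
  lia.
exists i0; split.
  by apply: (@W_eq_xdeg _ _ _ xi mu) => //; lia.
have HI : Inv th i0 (index g P) (init_state P).
  move=> c [Hl Hgc]; rewrite Hgc; split; first by rewrite index_mem.
  exists mu; rewrite nth_index //; split => //; split => //.
  by left; exists i0; split.
split; first exact: Inv_ESing HI.
by move=> Ls; exact: Inv_MCseq HI.
Qed.
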